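(* Let $\tilde{\mathbb{P}}$ be a probability measure under which $X_1,\ldots,X_n$ are i.i.d. positive-integer-valued random variables such that, for each $i$, the events $\{p\mid X_i\}$, $p\in\mathcal{P}$, $p\le n$, are mutually independent with $\tilde{\mathbb{P}}(p\mid X_i)=1/p$. For a prime $p$ let $Y_p:=\#\{1\le i\le n: p\mid X_i\}$, and for $k_1<k_2$ let $S(k_1,k_2):=\{p\in\mathcal{P}:k_1<p\le k_2\}$. Then for every $\epsilon>0$, for all sufficiently large $k$ and all sufficiently large $n$ (depending on $k,\epsilon$), \[ \frac{1}{n}\log\tilde{\mathbb{P}}\left(\sum_{p\in S(k,n)}Y_{p}^{2}>n^{2}\epsilon\right)\leq-\frac{\epsilon}{8}\log(k)+4. \] Consequently, for every $\epsilon>0$, \[ \limsup_{k\to\infty}\limsup_{n\to\infty}\frac{1}{n}\log\tilde{\mathbb{P}}\left(\sum_{p\in S(k,n)}Y_{p}^{2}>n^{2}\epsilon\right)=-\infty. \]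
   Context: $\mathcal{P}$ denotes the set of primes. *)

(* Defs.v *)
From Stdlib Require Import Reals Lra Lia ZArith Arith List Znumtheory.
Import ListNotations.
Open Scope R_scope.

(* The events involved in the theorem are finite Boolean combinations of the
   events {p | X_i}, so finite additivity is all that matters; every
   probability measure yields such a structure (Los-Marczewski extension). *)
Record prob_space (Omega : Type) := {
  Pr : (Omega -> Prop) -> R;
  Pr_nonneg : forall A, 0 <= Pr A;
  Pr_full : Pr (fun _ => True) = 1;
  Pr_ext : forall A B : Omega -> Prop, (forall w, A w <-> B w) -> Pr A = Pr B;
  Pr_add : forall A B : Omega -> Prop, (forall w, ~ (A w /\ B w)) ->
           Pr (fun w => A w \/ B w) = Pr A + Pr B
}.
Arguments Pr {Omega} _ _.

Definition Rprod_list (l : list nat) (f : nat -> R) : R :=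
  fold_right (fun i acc => f i * acc) 1 l.

Definition is_prime (p : nat) : Prop := prime (Z.of_nat p).

Definition hyps {Omega : Type} (ps : prob_space Omega) (n : nat)
  (X : nat -> Omega -> nat) : Prop :=
  (forall i w, (1 <= i <= n)%nat -> (0 < X i w)%nat) /\
  (forall A : nat -> nat -> Prop,
     Pr ps (fun w => forall i, (1 <= i <= n)%nat -> A i (X i w)) =
     Rprod_list (seq 1 n) (fun i => Pr ps (fun w => A i (X i w)))) /\
  (forall (i : nat) (A : nat -> Prop), (1 <= i <= n)%nat ->
     Pr ps (fun w => A (X i w)) = Pr ps (fun w => A (X 1%nat w))) /\
  (forall i, (1 <= i <= n)%nat ->
     forall T : list nat, NoDup T ->
       (forall p, In p T -> is_prime p /\ (p <= n)%nat) ->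
       Pr ps (fun w => forall p, In p T -> Nat.divide p (X i w)) =
       Rprod_list T (fun p => / INR p)).

Definition Y {Omega : Type} (n : nat) (X : nat -> Omega -> nat) (p : nat) (w : Omega) : nat :=
  length (filter (fun i => Nat.eqb (X i w mod p) 0) (seq 1 n)).

Definition sumY2 {Omega : Type} (n : nat) (X : nat -> Omega -> nat) (k1 k2 : nat)
  (w : Omega) : nat :=
  fold_right Nat.add 0%nat
    (map (fun p => if prime_dec (Z.of_nat p) then (Y n X p w * Y n X p w)%nat
                   else 0%nat)
         (seq (S k1) (k2 - k1))).

Definition bigEvent {Omega : Type} (n : nat) (X : nat -> Omega -> nat)
  (k : nat) (eps : R) : Omega -> Prop :=
  fun w => INR (sumY2 n X k n w) > INR n ^ 2 * eps.

(* Main.v *)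
Require Import Defs.
From Stdlib Require Import Reals Lra Lia ZArith Arith List Znumtheory Classical.
Import ListNotations.
Open Scope R_scope.

Definition RS {A} (l : list A) (f : A -> R) : R := fold_right (fun a acc => f a + acc) 0 l.
Definition RP {A} (l : list A) (f : A -> R) : R := fold_right (fun a acc => f a * acc) 1 l.

Lemma RS_app {A} (l1 l2 : list A) f : RS (l1 ++ l2) f = RS l1 f + RS l2 f.
Proof. induction l1; simpl; [lra|]. unfold RS in *; simpl. rewrite IHl1. lra. Qed.

Lemma RS_map {A B} (l : list A) (g : A -> B) f : RS (map g l) f = RS l (fun x => f (g x)).
Proof. induction l; simpl; auto. unfold RS in *; simpl; rewrite IHl; auto. Qed.

Lemma RS_ext_in {A} (l : list A) f g : (forall x, In x l -> f x = g x) -> RS l f = RS l g.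
Proof. induction l; intros H; simpl; auto. unfold RS in *; simpl. rewrite H by (left; auto).
rewrite IHl; auto. intros; apply H; right; auto. Qed.

Lemma RS_le {A} (l : list A) f g : (forall x, In x l -> f x <= g x) -> RS l f <= RS l g.
Proof. induction l; intros H; simpl; [lra|]. unfold RS in *; simpl.
assert (f a <= g a) by (apply H; left; auto).
assert (fold_right (fun a acc => f a + acc) 0 l <= fold_right (fun a acc => g a + acc) 0 l)
  by (apply IHl; intros; apply H; right; auto). lra. Qed.

Lemma RS_scal {A} (l : list A) f c : RS l (fun x => c * f x) = c * RS l f.
Proof. induction l; simpl; unfold RS in *; simpl; [lra|]. rewrite IHl. lra. Qed.

Lemma RS_plus {A} (l : list A) f g : RS l (fun x => f x + g x) = RS l f + RS l g.
Proof. induction l; simpl; unfold RS in *; simpl; [lra|]. rewrite IHl. lra. Qed.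

Lemma RS_zero {A} (l : list A) : RS l (fun _ => 0) = 0.
Proof. induction l; simpl; unfold RS in *; simpl; [lra|]. rewrite IHl. lra. Qed.

Lemma RS_flat_map {A B} (l : list A) (g : A -> list B) f :
  RS (flat_map g l) f = RS l (fun x => RS (g x) f).
Proof. induction l; simpl; auto. rewrite RS_app, IHl. reflexivity. Qed.

Lemma RS_filter {A} (l : list A) (b : A -> bool) f :
  RS (filter b l) f = RS l (fun x => if b x then f x else 0).
Proof. induction l; simpl; auto. destruct (b a); unfold RS in *; simpl; rewrite IHl; lra. Qed.

Lemma RS_nonneg {A} (l : list A) f : (forall x, In x l -> 0 <= f x) -> 0 <= RS l f.
Proof. intros H. rewrite <- (RS_zero l). apply RS_le. auto. Qed.

Lemma RP_ext_in {A} (l : list A) f g : (forall x, In x l -> f x = g x) -> RP l f = RP l g.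
Proof. induction l; intros H; simpl; auto. unfold RP in *; simpl. rewrite H by (left; auto).
rewrite IHl; auto. intros; apply H; right; auto. Qed.

Lemma RP_nonneg {A} (l : list A) f : (forall x, In x l -> 0 <= f x) -> 0 <= RP l f.
Proof. induction l; intros H; simpl; [lra|]. unfold RP in *; simpl.
apply Rmult_le_pos. apply H; left; auto. apply IHl; intros; apply H; right; auto. Qed.

Lemma RP_le {A} (l : list A) f g : (forall x, In x l -> 0 <= f x <= g x) -> RP l f <= RP l g.
Proof. induction l; intros H; simpl; [lra|]. unfold RP in *; simpl.
apply Rmult_le_compat. apply H; left; auto.
apply RP_nonneg; intros; apply H; right; auto. apply H; left; auto.
apply IHl; intros; apply H; right; auto. Qed.

Lemma RP_mul {A} (l : list A) f g : RP l (fun x => f x * g x) = RP l f * RP l g.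
Proof. induction l; simpl; unfold RP in *; simpl; [lra|]. rewrite IHl. ring. Qed.

Lemma RP_const {A} (l : list A) c : RP l (fun _ => c) = c ^ length l.
Proof. induction l; simpl; unfold RP in *; simpl; auto. rewrite IHl. ring. Qed.

Lemma RP_one {A} (l : list A) : RP l (fun _ => 1) = 1.
Proof. rewrite RP_const. apply pow1. Qed.

Lemma RP_exp {A} (l : list A) f : RP l (fun x => exp (f x)) = exp (RS l f).
Proof. induction l; simpl; unfold RP, RS in *; simpl. rewrite exp_0; auto.
rewrite IHl, exp_plus. auto. Qed.

Lemma RP_comm {A B} (l1 : list A) (l2 : list B) h :
  RP l1 (fun i => RP l2 (h i)) = RP l2 (fun j => RP l1 (fun i => h i j)).
Proof. induction l1; simpl. unfold RP at 1; simpl. symmetry. apply RP_one.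
unfold RP at 1; simpl. fold (RP l1 (fun i => RP l2 (h i))). rewrite IHl1.
rewrite RP_mul. reflexivity. Qed.

Lemma RP_map_filter {A} (W : list (nat * A)) (b : nat * A -> bool) (f : nat -> R) :
  RP (map fst (filter b W)) f = RP W (fun x => if b x then f (fst x) else 1).
Proof. induction W; simpl; auto. destruct (b a); simpl; unfold RP in *; simpl; rewrite IHW; try ring. Qed.

Lemma RS_seq_delta (F : nat -> R) c len s :
  RS (seq s len) (fun b => (if Nat.eqb c b then 1 else 0) * F b) =
  if andb (Nat.leb s c) (Nat.ltb c (s + len)) then F c else 0.
Proof. revert s; induction len; intros s; simpl.
- unfold RS; simpl. destruct (Nat.leb s c) eqn:E1; destruct (Nat.ltb c (s+0)) eqn:E2; simpl; auto.
  apply Nat.leb_le in E1; apply Nat.ltb_lt in E2; lia.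
- unfold RS in *; simpl. rewrite IHlen.
  destruct (Nat.eqb c s) eqn:E.
  + apply Nat.eqb_eq in E; subst.
    replace (Nat.leb (S s) s) with false by (symmetry; apply Nat.leb_gt; lia).
    replace (Nat.leb s s) with true by (symmetry; apply Nat.leb_le; lia).
    replace (Nat.ltb s (s + S len)) with true by (symmetry; apply Nat.ltb_lt; lia). simpl. ring.
  + apply Nat.eqb_neq in E.
    replace (Nat.leb s c && Nat.ltb c (s + S len))%bool with (Nat.leb (S s) c && Nat.ltb c (S (s + len)))%bool.
    rewrite Rmult_0_l, Rplus_0_l; reflexivity.
    destruct (Nat.leb (S s) c) eqn:E1; destruct (Nat.leb s c) eqn:E2; simpl;
    destruct (Nat.ltb c (S (s+len))) eqn:E3; destruct (Nat.ltb c (s + S len)) eqn:E4; auto;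
    repeat match goal with H : Nat.leb _ _ = true |- _ => apply Nat.leb_le in H
    | H : Nat.leb _ _ = false |- _ => apply Nat.leb_gt in H
    | H : Nat.ltb _ _ = true |- _ => apply Nat.ltb_lt in H
    | H : Nat.ltb _ _ = false |- _ => apply Nat.ltb_ge in H end; lia.
Qed.

Lemma RS_count {A} (L : list A) (h : A -> nat) (F : nat -> R) n :
  (forall x, In x L -> (h x <= n)%nat) ->
  RS L (fun x => F (h x)) =
  RS (seq 0 (S n)) (fun b => INR (length (filter (fun x => Nat.eqb (h x) b) L)) * F b).
Proof. induction L; intros H.
- change (RS [] (fun x => F (h x))) with 0. transitivity (RS (seq 0 (S n)) (fun _ => 0)). symmetry; apply RS_zero.
  apply RS_ext_in. intros; simpl; ring.
- change (RS (a :: L) (fun x => F (h x))) with (F (h a) + RS L (fun x => F (h x))). rewrite IHL by (intros; apply H; right; auto).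
  transitivity (RS (seq 0 (S n)) (fun b => (if Nat.eqb (h a) b then 1 else 0) * F b) +
    RS (seq 0 (S n)) (fun b => INR (length (filter (fun x => Nat.eqb (h x) b) L)) * F b)).
  + f_equal. rewrite RS_seq_delta.
    replace (Nat.leb 0 (h a) && Nat.ltb (h a) (0 + S n))%bool with true; auto.
    assert (h a <= n)%nat by (apply H; left; auto).
    symmetry. apply Bool.andb_true_iff; split. apply Nat.leb_le; lia. apply Nat.ltb_lt; lia.
  + rewrite <- RS_plus. apply RS_ext_in. intros b _.
    destruct (Nat.eqb (h a) b) eqn:Eb; simpl filter; rewrite Eb; cbn [length]; try rewrite S_INR; ring.
Qed.
Section Prob.
Context {Omega : Type} (ps : prob_space Omega).

Lemma Pr_empty (A : Omega -> Prop) : (forall w, ~ A w) -> Pr ps A = 0.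
Proof. intros H.
assert (E1 : Pr ps A = Pr ps (fun w => A w \/ A w)).
{ apply Pr_ext. intros w; tauto. }
rewrite Pr_add in E1 by (intros w [h _]; apply (H w h)). lra. Qed.

Lemma Pr_mono (A B : Omega -> Prop) : (forall w, A w -> B w) -> Pr ps A <= Pr ps B.
Proof. intros H.
assert (E1 : Pr ps B = Pr ps (fun w => A w \/ (B w /\ ~ A w))).
{ apply Pr_ext. intros w; split. intros hb. destruct (classic (A w)); tauto. intros [h|[h _]]; auto. }
rewrite Pr_add in E1 by (intros w Hw; tauto).
pose proof (Pr_nonneg _ ps (fun w => B w /\ ~ A w)). lra. Qed.

Lemma Pr_union (A B : Omega -> Prop) : Pr ps (fun w => A w \/ B w) <= Pr ps A + Pr ps B.
Proof.
assert (E1 : Pr ps (fun w => A w \/ B w) = Pr ps (fun w => A w \/ (B w /\ ~ A w))).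
{ apply Pr_ext. intros w; split. intros [h|h]; auto. destruct (classic (A w)); tauto. intros [h|[h _]]; auto. }
rewrite (Pr_add _ ps A (fun w => B w /\ ~ A w)) in E1 by (intros w Hw; tauto).
assert (Pr ps (fun w => B w /\ ~ A w) <= Pr ps B) by (apply Pr_mono; tauto). lra. Qed.

Lemma Pr_union_list {I} (L : list I) (F : I -> Omega -> Prop) :
  Pr ps (fun w => exists x, In x L /\ F x w) <= RS L (fun x => Pr ps (F x)).
Proof. induction L; simpl.
- rewrite Pr_empty. unfold RS; simpl; lra. intros w Hw; destruct Hw as [x [[] _]].
- unfold RS at 1; simpl. fold (RS L (fun x => Pr ps (F x))).
  eapply Rle_trans. apply Pr_mono with (B := fun w => F a w \/ exists x, In x L /\ F x w).
  intros w [x [[<-|hx] hf]]; eauto.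
  eapply Rle_trans. apply Pr_union. lra. Qed.
End Prob.

Fixpoint masks (n : nat) : list (list bool) :=
  match n with O => [[]] | S n' => map (cons false) (masks n') ++ map (cons true) (masks n') end.

Definition ones (m : list bool) : nat := length (filter (fun x => x) m).

Lemma masks_length n m : In m (masks n) -> length m = n.
Proof. revert m; induction n; simpl; intros m H.
- destruct H as [<-|[]]; auto.
- apply in_app_or in H; destruct H as [H|H]; apply in_map_iff in H; destruct H as [m' [<- H]];
  simpl; f_equal; auto. Qed.

Lemma masks_complete m : In m (masks (length m)).
Proof. induction m; simpl; auto. apply in_or_app. destruct a; [right|left]; apply in_map; auto. Qed.

Lemma ones_le m : (ones m <= length m)%nat.
Proof. unfold ones. induction m; simpl; auto. destruct a; simpl; lia. Qed.

Definition Ncnt n b := length (filter (fun m => Nat.eqb (ones m) b) (masks n)).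

Lemma length_filter_map {A B} (f : B -> bool) (g : A -> B) l :
  length (filter f (map g l)) = length (filter (fun x => f (g x)) l).
Proof. induction l; simpl; auto. destruct (f (g a)); simpl; auto. Qed.

Lemma length_filter_ext {A} (f g : A -> bool) l : (forall x, f x = g x) ->
  length (filter f l) = length (filter g l).
Proof. intros H; induction l; simpl; auto. rewrite H. destruct (g a); simpl; auto. Qed.

Lemma Ncnt_S0 n : Ncnt (S n) 0 = Ncnt n 0.
Proof. unfold Ncnt; simpl. rewrite filter_app, length_app, !length_filter_map.
rewrite (length_filter_ext (fun x => Nat.eqb (ones (true :: x)) 0) (fun _ => false)).
- rewrite (length_filter_ext (fun x => Nat.eqb (ones (false :: x)) 0) (fun x => Nat.eqb (ones x) 0)) by reflexivity.
  assert (forall l : list (list bool), length (filter (fun _ => false) l) = 0%nat) as Z by (induction l; simpl; auto).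
  rewrite Z. lia.
- intros x; reflexivity. Qed.

Lemma Ncnt_SS n b : Ncnt (S n) (S b) = (Ncnt n (S b) + Ncnt n b)%nat.
Proof. unfold Ncnt; simpl. rewrite filter_app, length_app, !length_filter_map. reflexivity. Qed.

Lemma pow_bern (x : R) c : 0 <= x -> x ^ S c + INR (S c) * x ^ c <= (x + 1) ^ S c.
Proof. intros hx. induction c.
- simpl. lra.
- assert (0 <= x ^ c) by (apply pow_le; auto).
  assert (0 <= x ^ S c) by (apply pow_le; auto).
  replace ((x+1) ^ S (S c)) with ((x+1) * (x+1) ^ S c) by reflexivity.
  replace (x ^ S (S c)) with (x * x ^ S c) by reflexivity.
  replace (x ^ S c) with (x * x ^ c) in * by reflexivity.
  rewrite S_INR in *. rewrite S_INR.
  assert (0 <= INR c) by apply pos_INR. nra. Qed.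

Lemma Ncnt_bound n b : INR (Ncnt n b) <= INR n ^ b / INR (fact b).
Proof. revert b; induction n; intros b.
- destruct b; unfold Ncnt; simpl. unfold Rdiv; rewrite Rinv_1; lra.
  rewrite Rmult_0_l. unfold Rdiv; rewrite Rmult_0_l. lra.
- destruct b.
  + rewrite Ncnt_S0. eapply Rle_trans. apply IHn. simpl. lra.
  + rewrite Ncnt_SS, plus_INR.
    pose proof (IHn (S b)); pose proof (IHn b).
    assert (IE : INR n ^ S b + INR (S b) * INR n ^ b <= (INR n + 1) ^ S b) by (apply pow_bern, pos_INR).
    rewrite S_INR with (n := n).
    assert (F : INR (fact (S b)) = INR (S b) * INR (fact b)) by (rewrite fact_simpl, mult_INR; auto).
    assert (0 < INR (fact b)) by apply INR_fact_lt_0.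
    assert (0 < INR (S b)) by (apply lt_0_INR; lia).
    rewrite F in *.
    assert (INR n ^ b / INR (fact b) = INR (S b) * INR n ^ b / (INR (S b) * INR (fact b))) as G
      by (field; lra).
    rewrite G in H0.
    apply Rle_trans with ((INR n ^ S b + INR (S b) * INR n ^ b) / (INR (S b) * INR (fact b))).
    unfold Rdiv in *. rewrite Rmult_plus_distr_r. lra.
    unfold Rdiv. apply Rmult_le_compat_r; auto. left; apply Rinv_0_lt_compat; nra. Qed.

Lemma exp_INR_mul (x : R) b : exp (INR b * x) = exp x ^ b.
Proof. induction b. simpl. rewrite Rmult_0_l; apply exp_0.
rewrite S_INR. replace ((INR b + 1) * x) with (x + INR b * x) by ring. rewrite exp_plus, IHb. reflexivity. Qed.

Lemma pow_fact_bound b : INR b ^ b <= exp 1 ^ b * INR (fact b).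
Proof. induction b.
- simpl; lra.
- assert (K : INR (S b) ^ b <= exp 1 * INR b ^ b).
  { destruct b. simpl. pose proof (exp_ineq1_le 1). lra.
    set (m := S b) in *. assert (0 < INR m) by (apply lt_0_INR; unfold m; lia).
    replace (INR (S m)) with (INR m * (1 + / INR m)) by (rewrite S_INR; field; lra).
    rewrite Rpow_mult_distr.
    assert ((1 + / INR m) ^ m <= exp 1).
    { apply Rle_trans with (exp (/ INR m) ^ m). apply pow_incr. split.
      assert (0 < / INR m) by (apply Rinv_0_lt_compat; auto). lra. apply exp_ineq1_le.
      rewrite <- exp_INR_mul. replace (INR m * / INR m) with 1 by (field; lra). lra. }
    assert (0 <= INR m ^ m) by (apply pow_le; lra). nra. }
  replace (INR (S b) ^ S b) with (INR (S b) * INR (S b) ^ b) by reflexivity.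
  rewrite fact_simpl, mult_INR.
  replace (exp 1 ^ S b) with (exp 1 * exp 1 ^ b) by reflexivity.
  assert (0 < INR (S b)) by (apply lt_0_INR; lia).
  assert (0 < exp 1) by apply exp_pos.
  apply Rle_trans with (INR (S b) * (exp 1 * INR b ^ b)).
  apply Rmult_le_compat_l; lra.
  assert (exp 1 * INR b ^ b <= exp 1 * (exp 1 ^ b * INR (fact b))) by (apply Rmult_le_compat_l; lra).
  nra. Qed.

Lemma geom_seq s len : RS (seq s len) (fun b => (/4) ^ b) <= (/4) ^ s * (4/3).
Proof. revert s; induction len; intros s; simpl.
- unfold RS; simpl. assert (0 < (/4)^s) by (apply pow_lt; lra). lra.
- unfold RS in *; simpl. specialize (IHlen (S s)). simpl in IHlen.
  assert (0 < (/4)^s) by (apply pow_lt; lra). lra. Qed.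

Lemma inv_sq_seq len s : (1 <= s)%nat ->
  RS (seq (S s) len) (fun m => / INR m ^ 2) <= / INR s - / INR (s + len).
Proof. revert s; induction len; intros s hs.
- unfold RS; simpl. rewrite Nat.add_0_r. lra.
- change (RS (seq (S s) (S len)) (fun m => / INR m ^ 2)) with
    (/ INR (S s) ^ 2 + RS (seq (S (S s)) len) (fun m => / INR m ^ 2)).
  specialize (IHlen (S s) ltac:(lia)).
  replace (S s + len)%nat with (s + S len)%nat in IHlen by lia.
  assert (1 <= INR s) by (apply (le_INR 1); auto).
  rewrite S_INR in *.
  assert (/ (INR s + 1) ^ 2 <= / INR s - / (INR s + 1)).
  { apply Rle_trans with (/ (INR s * (INR s + 1))).
    apply Rinv_le_contravar. nra. nra. right. field. lra. }
  lra. Qed.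
Lemma exp_le_mono x y : x <= y -> exp x <= exp y.
Proof. intros [h|h]. left; apply exp_increasing; auto. subst; lra. Qed.

Lemma ln_le_mono x y : 0 < x -> x <= y -> ln x <= ln y.
Proof. intros h [h'|h']. left; apply ln_increasing; auto. subst; lra. Qed.

Definition isp (p : nat) : bool := if prime_dec (Z.of_nat p) then true else false.
Definition Plist (k n : nat) : list nat := filter isp (seq (S k) (n - k)).

Lemma Plist_in k n p : In p (Plist k n) -> is_prime p /\ (k < p)%nat /\ (p <= n)%nat.
Proof. unfold Plist; intros H. apply filter_In in H. destruct H as [H1 H2].
apply in_seq in H1. unfold isp in H2. destruct (prime_dec (Z.of_nat p)); try discriminate.
split; auto. lia. Qed.

Lemma Plist_nodup k n : NoDup (Plist k n).
Proof. apply NoDup_filter, seq_NoDup. Qed.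

Lemma Plist_length k n : (length (Plist k n) <= n)%nat.
Proof. unfold Plist. eapply Nat.le_trans. apply filter_length_le. rewrite length_seq. lia. Qed.

Fixpoint wits (ms : list (list bool)) (P : list nat) : list (list (nat * list bool)) :=
  match P with
  | [] => [[]]
  | p :: P' => flat_map (fun m => map (cons (p, m)) (wits ms P')) ms
  end.

Lemma wits_sum ms P (w : nat * list bool -> R) :
  RS (wits ms P) (fun W => RP W w) = RP P (fun p => RS ms (fun m => w (p, m))).
Proof. induction P; simpl.
- unfold RS, RP; simpl. lra.
- rewrite RS_flat_map. unfold RP at 2; simpl. fold (RP P (fun p => RS ms (fun m => w (p, m)))).
  rewrite <- IHP. rewrite Rmult_comm, <- (RS_scal ms (fun m => w (a, m))). apply RS_ext_in. intros m _.
  rewrite RS_map. rewrite Rmult_comm, <- RS_scal. apply RS_ext_in. intros; unfold RP; simpl; ring. Qed.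

Lemma wits_in ms P W : In W (wits ms P) -> map fst W = P /\ forall x, In x W -> In (snd x) ms.
Proof. revert W; induction P; simpl; intros W H.
- destruct H as [<-|[]]. simpl; split; auto. intros x [].
- apply in_flat_map in H. destruct H as [m [hm H]]. apply in_map_iff in H.
  destruct H as [W' [<- H]]. apply IHP in H. destruct H as [H1 H2]. simpl. rewrite H1.
  split; auto. intros x [<-|hx]; auto. Qed.

Lemma wits_mem ms P (f : nat -> list bool) : (forall p, In p P -> In (f p) ms) ->
  In (map (fun p => (p, f p)) P) (wits ms P).
Proof. induction P; simpl; intros H. left; auto.
apply in_flat_map. exists (f a). split. apply H; left; auto. apply in_map. apply IHP.
intros; apply H; right; auto. Qed.

Definition EvW {Omega : Type} (n : nat) (X : nat -> Omega -> nat) (W : list (nat * list bool))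
  (w : Omega) : Prop :=
  forall p m, In (p, m) W -> forall j, (j < n)%nat -> nth j m false = true -> Nat.divide p (X (S j) w).

Lemma RP_mask c m s :
  RP (seq s (length m)) (fun i => if nth (i - s) m false then c else 1) = c ^ ones m.
Proof. revert s; induction m; intros s; simpl.
- unfold RP; simpl; auto.
- change (RP (s :: seq (S s) (length m)) (fun i => if nth (i - s) (a :: m) false then c else 1))
    with ((if nth (s - s) (a :: m) false then c else 1) *
          RP (seq (S s) (length m)) (fun i => if nth (i - s) (a :: m) false then c else 1)).
  rewrite Nat.sub_diag. simpl nth.
  rewrite (RP_ext_in _ _ (fun i => if nth (i - S s) m false then c else 1)).
  rewrite IHm. unfold ones; destruct a; simpl; ring.
  intros i hi. apply in_seq in hi. replace (i - s)%nat with (S (i - S s)) by lia. reflexivity. Qed.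

Lemma nodup_map_fst_filter {A} (W : list (nat * A)) f :
  NoDup (map fst W) -> NoDup (map fst (filter f W)).
Proof. induction W; simpl; intros H; auto. inversion H; subst.
destruct (f a); simpl; auto. constructor; auto. intros hin. apply H2.
apply in_map_iff in hin. destruct hin as [x [<- hx]]. apply filter_In in hx.
apply in_map; tauto. Qed.

Lemma Pr_EvW {Omega : Type} (ps : prob_space Omega) n X k W :
  hyps ps n X -> In W (wits (masks n) (Plist k n)) ->
  Pr ps (EvW n X W) = RP W (fun x => (/ INR (fst x)) ^ ones (snd x)).
Proof. intros [_ [Hind [_ Hdiv]]] HW. apply wits_in in HW. destruct HW as [HW1 HW2].
set (T := fun i => map fst (filter (fun x : nat * list bool => nth (i - 1) (snd x) false) W)).
transitivity (Pr ps (fun w => forall i, (1 <= i <= n)%nat ->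
   (fun i x => forall p, In p (T i) -> Nat.divide p x) i (X i w))).
{ apply Pr_ext. intros w; split.
  - intros H i hi p hp. unfold T in hp. apply in_map_iff in hp. destruct hp as [[p' m] [<- hx]].
    apply filter_In in hx. destruct hx as [hx hb]. simpl in hb |- *.
    replace i with (S (i - 1)) by lia. apply (H p' m hx); auto. lia.
  - intros H p m hin j hj hb. apply (H (S j)). lia. unfold T. apply in_map_iff.
    exists (p, m). split; auto. apply filter_In. split; auto. simpl. rewrite Nat.sub_0_r. auto. }
rewrite (Hind (fun i x => forall p, In p (T i) -> Nat.divide p x)). change (Rprod_list (seq 1 n) ?f) with (RP (seq 1 n) f).
rewrite (RP_ext_in _ _ (fun i => RP (T i) (fun p => / INR p))).
2:{ intros i hi. apply in_seq in hi. rewrite Hdiv. reflexivity. lia.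
    unfold T. apply nodup_map_fst_filter. rewrite HW1. apply Plist_nodup.
    intros p hp. unfold T in hp. apply in_map_iff in hp. destruct hp as [x [<- hx]].
    apply filter_In in hx. destruct hx as [hx _].
    assert (In (fst x) (Plist k n)) by (rewrite <- HW1; apply in_map; auto).
    apply Plist_in in H. tauto. }
unfold T. rewrite (RP_ext_in _ _ (fun i => RP W (fun x => if nth (i - 1) (snd x) false then / INR (fst x) else 1)))
  by (intros i _; apply (RP_map_filter W (fun y => nth (i - 1) (snd y) false))).
rewrite RP_comm. apply RP_ext_in. intros x hx.
pose proof (masks_length _ _ (HW2 x hx)) as Hl. rewrite <- Hl. apply RP_mask. Qed.
Definition okb (g : R) (n p : nat) (m : list bool) : bool :=
  orb (Nat.eqb (ones m) 0) (if Rlt_dec (g * INR n) (INR (ones m) * INR p) then true else false).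

Definition wt (lam g : R) (n : nat) (x : nat * list bool) : R :=
  if okb g n (fst x) (snd x)
  then (/ INR (fst x)) ^ ones (snd x) * exp (lam * INR (ones (snd x)) ^ 2 / INR n)
  else 0.

Definition FW {Omega : Type} (eps lam g : R) (n : nat) (X : nat -> Omega -> nat)
  (W : list (nat * list bool)) (w : Omega) : Prop :=
  EvW n X W w /\ (forall x, In x W -> okb g n (fst x) (snd x) = true) /\
  RS W (fun x => INR (ones (snd x)) ^ 2) > eps * INR n ^ 2 / 2.

Lemma wt_nonneg lam g n x : (0 < fst x)%nat -> 0 <= wt lam g n x.
Proof. intros h. unfold wt. destruct okb; [|lra]. apply Rmult_le_pos.
apply pow_le. left; apply Rinv_0_lt_compat, lt_0_INR; auto. left; apply exp_pos. Qed.

Lemma Pr_FW {Omega : Type} (ps : prob_space Omega) eps lam g n X k W :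
  hyps ps n X -> In W (wits (masks n) (Plist k n)) -> 0 <= lam -> (0 < n)%nat ->
  Pr ps (FW eps lam g n X W) <= exp (- (lam * eps * INR n / 2)) * RP W (wt lam g n).
Proof. intros Hh HW hl hn.
assert (Hpos : forall x, In x W -> (0 < fst x)%nat).
{ intros x hx. apply wits_in in HW. destruct HW as [H1 _].
  assert (In (fst x) (Plist k n)) by (rewrite <- H1; apply in_map; auto).
  apply Plist_in in H. lia. }
assert (R0 : 0 <= RP W (wt lam g n)) by (apply RP_nonneg; intros; apply wt_nonneg; auto).
assert (E0 : 0 < exp (- (lam * eps * INR n / 2))) by apply exp_pos.
destruct (classic ((forall x, In x W -> okb g n (fst x) (snd x) = true) /\
   RS W (fun x => INR (ones (snd x)) ^ 2) > eps * INR n ^ 2 / 2)) as [[Hok Hc]|Hn].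
2:{ rewrite Pr_empty. nra. intros w [_ h]. tauto. }
eapply Rle_trans. apply Pr_mono with (B := EvW n X W). intros w [h _]; auto.
rewrite (Pr_EvW ps n X k W Hh HW).
rewrite (RP_ext_in W (wt lam g n) (fun x => (/ INR (fst x)) ^ ones (snd x) *
    exp (lam / INR n * INR (ones (snd x)) ^ 2))).
2:{ intros x hx. unfold wt. rewrite (Hok x hx). f_equal. f_equal. unfold Rdiv. ring. }
rewrite RP_mul, RP_exp, RS_scal.
set (V := RP W (fun x => (/ INR (fst x)) ^ ones (snd x))).
set (S := RS W (fun x => INR (ones (snd x)) ^ 2)) in *.
assert (0 <= V) by (apply RP_nonneg; intros x hx; apply pow_le; left; apply Rinv_0_lt_compat, lt_0_INR; auto).
assert (1 <= exp (- (lam * eps * INR n / 2)) * exp (lam / INR n * S)).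
{ rewrite <- exp_plus. assert (0 < INR n) by (apply lt_0_INR; auto).
  assert (0 <= - (lam * eps * INR n / 2) + lam / INR n * S).
  { assert (S / INR n >= eps * INR n / 2).
    { apply Rle_ge. apply Rmult_le_reg_r with (INR n); auto.
      replace (S / INR n * INR n) with S by (field; lra). nra. }
    replace (- (lam * eps * INR n / 2) + lam / INR n * S) with (lam * (S / INR n - eps * INR n / 2))
      by (field; lra).
    apply Rmult_le_pos; lra. }
  pose proof (exp_ineq1_le (- (lam * eps * INR n / 2) + lam / INR n * S)). lra. }
nra. Qed.

Lemma per_prime lam g n p :
  (0 < n)%nat -> (0 < p)%nat -> 0 < g -> 0 <= lam -> exp 1 * exp lam / g <= / 4 ->
  RS (masks n) (fun m => wt lam g n (p, m)) <= 4 / 3.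
Proof. intros hn hp hg hl hr.
assert (Hn : 0 < INR n) by (apply lt_0_INR; auto).
assert (Hp : 0 < INR p) by (apply lt_0_INR; auto).
set (a := exp lam). assert (Ha : 0 < a) by apply exp_pos.
set (G := fun b : nat => if Nat.eqb b 0 then 1 else
           if Rlt_dec (g * INR n) (INR b * INR p) then (a / INR p) ^ b else 0).
apply Rle_trans with (RS (masks n) (fun m => G (ones m))).
{ apply RS_le. intros m hm. pose proof (masks_length _ _ hm) as Hl.
  pose proof (ones_le m) as Ho. rewrite Hl in Ho.
  unfold wt, okb, G; simpl fst; simpl snd.
  destruct (Nat.eqb (ones m) 0) eqn:E0.
  - apply Nat.eqb_eq in E0. rewrite E0. simpl.
    replace (lam * (0 * (0 * 1)) / INR n) with 0 by (field; lra). rewrite exp_0. lra.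
  - simpl. destruct (Rlt_dec (g * INR n) (INR (ones m) * INR p)); [|lra].
    unfold Rdiv at 2. rewrite Rpow_mult_distr, Rmult_comm.
    apply Rmult_le_compat_r. apply pow_le; left; apply Rinv_0_lt_compat; auto.
    unfold a. rewrite <- exp_INR_mul. apply exp_le_mono.
    assert (0 <= INR (ones m)) by apply pos_INR.
    assert (INR (ones m) <= INR n) by (apply le_INR; auto).
    assert (INR (ones m) ^ 2 / INR n <= INR (ones m)).
    { apply Rmult_le_reg_r with (INR n); auto.
      replace (INR (ones m) ^ 2 / INR n * INR n) with (INR (ones m) ^ 2) by (field; lra). nra. }
    replace (lam * (INR (ones m) * (INR (ones m) * 1)) / INR n) with (lam * (INR (ones m) ^ 2 / INR n)) by (simpl; field; lra).
    nra. }
rewrite (RS_count (masks n) ones G n).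
2:{ intros m hm. pose proof (ones_le m). rewrite (masks_length _ _ hm) in H; auto. }
change (seq 0 (S n)) with (0%nat :: seq 1 n).
change (RS (0%nat :: seq 1 n) ?f) with (f 0%nat + RS (seq 1 n) f). cbv beta.
assert (H0 : INR (Ncnt n 0) * G 0%nat <= 1).
{ unfold G. simpl Nat.eqb. cbv iota. rewrite Rmult_1_r. pose proof (Ncnt_bound n 0) as H. simpl pow in H.
  change (INR (fact 0)) with 1 in H. unfold Rdiv in H. rewrite Rinv_1 in H. lra. }
assert (H1 : RS (seq 1 n) (fun b => INR (length (filter (fun x => Nat.eqb (ones x) b) (masks n))) * G b)
   <= RS (seq 1 n) (fun b => (/4) ^ b)).
{ apply RS_le. intros b hb. apply in_seq in hb.
  fold (Ncnt n b). unfold G. replace (Nat.eqb b 0) with false by (symmetry; apply Nat.eqb_neq; lia).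
  destruct (Rlt_dec (g * INR n) (INR b * INR p)) as [hh|hh].
  2:{ rewrite Rmult_0_r. apply pow_le; lra. }
  pose proof (Ncnt_bound n b) as HN.
  assert (0 < INR (fact b)) by apply INR_fact_lt_0.
  assert (0 <= (a / INR p) ^ b) by (apply pow_le; unfold Rdiv; apply Rmult_le_pos; [lra|left; apply Rinv_0_lt_compat; auto]).
  apply Rle_trans with (INR n ^ b / INR (fact b) * (a / INR p) ^ b).
  apply Rmult_le_compat_r; auto.
  replace (INR n ^ b / INR (fact b) * (a / INR p) ^ b) with ((INR n * a / INR p) ^ b / INR (fact b))
    by (unfold Rdiv; rewrite !Rpow_mult_distr, pow_inv; ring).
  assert (U : INR n * a / INR p <= INR b * (a / g)).
  { apply Rmult_le_reg_r with (INR p * g). nra.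
    replace (INR n * a / INR p * (INR p * g)) with (a * (g * INR n)) by (field; lra).
    replace (INR b * (a / g) * (INR p * g)) with (a * (INR b * INR p)) by (field; lra). nra. }
  assert (U0 : 0 <= INR n * a / INR p) by (unfold Rdiv; apply Rmult_le_pos; [nra|left; apply Rinv_0_lt_compat; auto]).
  apply Rle_trans with ((INR b * (a / g)) ^ b / INR (fact b)).
  { unfold Rdiv at 1 3. apply Rmult_le_compat_r. left; apply Rinv_0_lt_compat; auto.
    apply pow_incr; split; auto. }
  rewrite Rpow_mult_distr.
  pose proof (pow_fact_bound b) as PF.
  assert (0 <= (a / g) ^ b) by (apply pow_le; unfold Rdiv; apply Rmult_le_pos; [lra|left; apply Rinv_0_lt_compat; auto]).
  apply Rle_trans with (exp 1 ^ b * (a / g) ^ b).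
  { set (q := (a / g) ^ b) in *. apply Rmult_le_reg_r with (INR (fact b)); auto.
    replace (INR b ^ b * q / INR (fact b) * INR (fact b)) with (INR b ^ b * q)
      by (field; lra).
    replace (exp 1 ^ b * q * INR (fact b)) with ((exp 1 ^ b * INR (fact b)) * q) by ring.
    apply Rmult_le_compat_r; auto. }
  rewrite <- Rpow_mult_distr. apply pow_incr. split.
  apply Rmult_le_pos. left; apply exp_pos. unfold Rdiv; apply Rmult_le_pos; [lra|left; apply Rinv_0_lt_compat; auto].
  unfold a. unfold Rdiv in *. rewrite <- Rmult_assoc. auto. }
pose proof (geom_seq 1 n). simpl in H. unfold Ncnt in H0. lra. Qed.
Definition hv {Omega : Type} (g : R) (n : nat) (X : nat -> Omega -> nat) (p : nat) (w : Omega) : bool :=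
  if Rlt_dec (g * INR n) (INR (Y n X p w) * INR p) then true else false.

Definition mk {Omega : Type} g n (X : nat -> Omega -> nat) p w : list bool :=
  map (fun i => andb (hv g n X p w) (Nat.eqb (X i w mod p) 0)) (seq 1 n).

Lemma ones_map {A} (f : A -> bool) l : ones (map f l) = length (filter f l).
Proof. unfold ones; induction l; simpl; auto. destruct (f a); simpl; auto. Qed.

Lemma len_filter_false {A} (l : list A) : length (filter (fun _ => false) l) = 0%nat.
Proof. induction l; simpl; auto. Qed.

Lemma ones_mk {Omega : Type} g n (X : nat -> Omega -> nat) p w :
  ones (mk g n X p w) = if hv g n X p w then Y n X p w else 0%nat.
Proof. unfold mk. rewrite ones_map. destruct (hv g n X p w); simpl.
- unfold Y. reflexivity.
- apply len_filter_false. Qed.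

Lemma INR_fold (l : list nat) (h : nat -> nat) :
  INR (fold_right Nat.add 0%nat (map h l)) = RS l (fun p => INR (h p)).
Proof. induction l; simpl; auto. rewrite plus_INR, IHl. reflexivity. Qed.

Lemma INR_sumY2 {Omega : Type} n (X : nat -> Omega -> nat) k w :
  INR (sumY2 n X k n w) = RS (Plist k n) (fun p => INR (Y n X p w) ^ 2).
Proof. unfold sumY2. rewrite INR_fold. unfold Plist. rewrite RS_filter.
apply RS_ext_in. intros p _. unfold isp. destruct (prime_dec (Z.of_nat p)); simpl; auto.
rewrite mult_INR; ring. Qed.

Lemma inv_sq_P k n : (1 <= k)%nat -> RS (Plist k n) (fun p => / INR p ^ 2) <= / INR k.
Proof. intros hk. unfold Plist. rewrite RS_filter.
apply Rle_trans with (RS (seq (S k) (n - k)) (fun p => / INR p ^ 2)).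
apply RS_le. intros p hp. apply in_seq in hp. destruct (isp p). lra.
left; apply Rinv_0_lt_compat, pow_lt, lt_0_INR; lia.
eapply Rle_trans. apply inv_sq_seq; auto.
assert (0 < / INR (k + (n - k))) by (apply Rinv_0_lt_compat, lt_0_INR; lia). lra. Qed.

Lemma nth_map_seq {B} (f : nat -> B) s len j d : (j < len)%nat ->
  nth j (map f (seq s len)) d = f (s + j)%nat.
Proof. intros h. rewrite nth_indep with (d' := f 0%nat) by (rewrite length_map, length_seq; auto).
rewrite map_nth, seq_nth; auto. Qed.

Lemma cover {Omega : Type} eps lam g n (X : nat -> Omega -> nat) k w :
  (1 <= k)%nat -> 0 < g -> g * g = eps * INR k / 2 -> bigEvent n X k eps w ->
  exists W, In W (wits (masks n) (Plist k n)) /\ FW eps lam g n X W w.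
Proof. intros hk hg hgg hE.
exists (map (fun p => (p, mk g n X p w)) (Plist k n)). split.
{ apply wits_mem. intros p _. replace n with (length (mk g n X p w)) at 2.
  apply masks_complete. unfold mk; rewrite length_map, length_seq; auto. }
split; [|split].
- intros p m hin j hj hb. apply in_map_iff in hin. destruct hin as [x [hx hin]].
  injection hx; intros <- <-. apply Plist_in in hin.
  unfold mk in hb. rewrite nth_map_seq in hb by auto. apply Bool.andb_true_iff in hb. destruct hb as [_ hb].
  apply Nat.eqb_eq in hb. apply Nat.Private_NLcmProp.mod_divide. lia. simpl in hb. auto.
- intros x hx. apply in_map_iff in hx. destruct hx as [p [<- hp]]. simpl.
  unfold okb. rewrite ones_mk. destruct (hv g n X p w) eqn:Eh.
  + unfold hv in Eh. destruct (Rlt_dec (g * INR n) (INR (Y n X p w) * INR p)); try discriminate.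
    destruct (Rlt_dec (g * INR n) (INR (Y n X p w) * INR p)); try tauto. apply Bool.orb_true_r.
  + reflexivity.
- rewrite RS_map. simpl.
  rewrite (RS_ext_in _ _ (fun p => if hv g n X p w then INR (Y n X p w) ^ 2 else 0))
    by (intros p _; rewrite ones_mk; destruct (hv g n X p w); simpl; ring).
  unfold bigEvent in hE. rewrite INR_sumY2 in hE.
  rewrite (RS_ext_in _ (fun p => INR (Y n X p w) ^ 2)
     (fun p => (if hv g n X p w then INR (Y n X p w) ^ 2 else 0) +
               (if hv g n X p w then 0 else INR (Y n X p w) ^ 2))) in hE
    by (intros p _; destruct (hv g n X p w); ring).
  rewrite RS_plus in hE.
  assert (L : RS (Plist k n) (fun p => if hv g n X p w then 0 else INR (Y n X p w) ^ 2)
             <= (g * INR n) ^ 2 * RS (Plist k n) (fun p => / INR p ^ 2)).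
  { rewrite <- RS_scal. apply RS_le. intros p hp. apply Plist_in in hp.
    assert (Hp : 0 < INR p) by (apply lt_0_INR; lia).
    unfold hv. destruct (Rlt_dec (g * INR n) (INR (Y n X p w) * INR p)) as [h|h].
    apply Rmult_le_pos. apply pow_le. assert (0 <= INR n) by apply pos_INR. nra.
    left; apply Rinv_0_lt_compat, pow_lt; auto.
    apply Rnot_lt_le in h.
    assert (0 <= INR (Y n X p w)) by apply pos_INR.
    replace (INR (Y n X p w) ^ 2) with ((INR (Y n X p w) * INR p) ^ 2 * / INR p ^ 2)
      by (field; lra).
    apply Rmult_le_compat_r. left; apply Rinv_0_lt_compat, pow_lt; auto.
    apply pow_incr. split; auto. nra. }
  pose proof (inv_sq_P k n hk).
  assert (0 < INR k) by (apply lt_0_INR; lia).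
  assert (L2 : (g * INR n) ^ 2 * RS (Plist k n) (fun p => / INR p ^ 2) <= eps * INR n ^ 2 / 2).
  { apply Rle_trans with ((g * INR n) ^ 2 * / INR k).
    apply Rmult_le_compat_l; auto. apply pow_le. assert (0 <= INR n) by apply pos_INR. nra.
    replace ((g * INR n) ^ 2) with (g * g * INR n ^ 2) by ring. rewrite hgg. right. field. lra. }
  lra.
Qed.

Lemma main_bound {Omega : Type} (ps : prob_space Omega) eps lam g n (X : nat -> Omega -> nat) k :
  hyps ps n X -> (1 <= k)%nat -> (0 < n)%nat -> 0 < g -> g * g = eps * INR k / 2 -> 0 <= lam ->
  exp 1 * exp lam / g <= / 4 ->
  Pr ps (bigEvent n X k eps) <= exp (- (lam * eps * INR n / 2)) * (4 / 3) ^ length (Plist k n).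
Proof. intros Hh hk hn hg hgg hl hr.
eapply Rle_trans. apply Pr_mono with
  (B := fun w => exists W, In W (wits (masks n) (Plist k n)) /\ FW eps lam g n X W w).
{ intros w hw. apply (cover eps lam g n X k w hk hg hgg hw). }
eapply Rle_trans. apply Pr_union_list.
eapply Rle_trans. apply RS_le with (g := fun W => exp (- (lam * eps * INR n / 2)) * RP W (wt lam g n)).
{ intros W hW. apply (Pr_FW ps eps lam g n X k W); auto. }
rewrite RS_scal. apply Rmult_le_compat_l. left; apply exp_pos.
rewrite wits_sum. rewrite <- RP_const. apply RP_le. intros p hp. split.
apply RS_nonneg. intros m _. apply wt_nonneg. simpl. apply Plist_in in hp. lia.
apply per_prime; auto. apply Plist_in in hp. lia. Qed.
Lemma part1 : forall eps : R, 0 < eps ->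
    exists K : nat, forall k : nat, (K <= k)%nat ->
    exists N : nat, forall n : nat, (N <= n)%nat ->
    forall (Omega : Type) (ps : prob_space Omega) (X : nat -> Omega -> nat),
      hyps ps n X ->
      Pr ps (bigEvent n X k eps) = 0 \/
      / INR n * ln (Pr ps (bigEvent n X k eps)) <= - (eps / 8) * ln (INR k) + 4.
Proof. intros eps he.
destruct (INR_unbounded (100000 / (eps * eps))) as [K HK]. exists K. intros k hkK.
exists 1%nat. intros n hn Omega ps X Hh.
assert (Hkk : INR K <= INR k) by (apply le_INR; auto).
assert (Hq : 0 < 100000 / (eps * eps)) by (apply Rdiv_lt_0_compat; nra).
assert (Hk0 : 0 < INR k) by lra.
assert (hk : (1 <= k)%nat) by (destruct k; [simpl in Hk0; lra| lia]).
assert (Hk1 : 1 <= INR k) by (apply (le_INR 1); auto).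
assert (HD : 100000 < eps * eps * INR k).
{ assert (eps * eps * (100000 / (eps * eps)) = 100000) by (field; lra).
  assert (0 < eps * eps) by nra. nra. }
set (lam := ln (INR k) / 4).
assert (Hl : 0 <= lam).
{ unfold lam. pose proof (ln_le_mono 1 (INR k) ltac:(lra) Hk1). rewrite ln_1 in H. lra. }
set (g := sqrt (eps * INR k / 2)).
assert (Hg : 0 < g) by (apply sqrt_lt_R0; nra).
assert (Hgg : g * g = eps * INR k / 2) by (apply sqrt_sqrt; nra).
assert (Hr : exp 1 * exp lam / g <= / 4).
{ set (E := exp 1). set (A := exp lam).
  assert (HA4 : A ^ 4 = INR k).
  { unfold A. rewrite <- exp_INR_mul. replace (INR 4 * lam) with (ln (INR k)).
    apply exp_ln; auto. unfold lam. simpl INR. field. }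
  assert (HE : E ^ 4 <= 81).
  { replace 81 with (3 ^ 4) by (simpl; ring). apply pow_incr. split. left; apply exp_pos. apply exp_le_3. }
  assert (HA : 0 < A) by apply exp_pos.
  assert (HE0 : 0 < E) by apply exp_pos.
  assert (Hr0 : 0 <= E * A / g) by (unfold Rdiv; apply Rmult_le_pos; [nra|left; apply Rinv_0_lt_compat; auto]).
  assert (H4 : (E * A / g) ^ 4 < (/ 4) ^ 4).
  { replace ((E * A / g) ^ 4) with (E ^ 4 * A ^ 4 / ((g * g) ^ 2)) by (field; lra).
    rewrite HA4, Hgg.
    replace (E ^ 4 * INR k / (eps * INR k / 2) ^ 2) with (4 * E ^ 4 / (eps * eps * INR k)) by (field; lra).
    apply Rmult_lt_reg_r with (eps * eps * INR k). lra.
    unfold Rdiv. rewrite Rmult_assoc, Rinv_l by lra. simpl. lra. }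
  destruct (Rle_lt_dec (E * A / g) (/ 4)) as [h|h]; auto.
  assert ((/ 4) ^ 4 <= (E * A / g) ^ 4) by (apply pow_incr; split; lra). lra. }
assert (Hn : (0 < n)%nat) by lia.
pose proof (main_bound ps eps lam g n X k Hh hk Hn Hg Hgg Hl Hr) as MB.
assert (Hp : (4 / 3) ^ length (Plist k n) <= exp (INR n)).
{ apply Rle_trans with (exp 1 ^ length (Plist k n)).
  apply pow_incr. split. lra. pose proof (exp_ineq1_le 1). lra.
  apply Rle_trans with (exp 1 ^ n). apply Rle_pow. pose proof (exp_ineq1_le 1). lra. apply Plist_length.
  rewrite <- exp_INR_mul. rewrite Rmult_1_r. lra. }
assert (MB2 : Pr ps (bigEvent n X k eps) <= exp (- (lam * eps * INR n / 2) + INR n)).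
{ rewrite exp_plus. eapply Rle_trans. apply MB. apply Rmult_le_compat_l. left; apply exp_pos. auto. }
destruct (Req_dec (Pr ps (bigEvent n X k eps)) 0) as [h0|h0]; [left; auto|right].
assert (hP : 0 < Pr ps (bigEvent n X k eps)) by (pose proof (Pr_nonneg _ ps (bigEvent n X k eps)); lra).
assert (HL : ln (Pr ps (bigEvent n X k eps)) <= - (lam * eps * INR n / 2) + INR n).
{ rewrite <- (ln_exp (- (lam * eps * INR n / 2) + INR n)). apply ln_le_mono; auto. }
assert (Hn0 : 0 < INR n) by (apply lt_0_INR; auto).
apply Rle_trans with (/ INR n * (- (lam * eps * INR n / 2) + INR n)).
apply Rmult_le_compat_l; auto. left; apply Rinv_0_lt_compat; auto.
replace (/ INR n * (- (lam * eps * INR n / 2) + INR n)) with (- (eps / 8) * ln (INR k) + 1)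
  by (unfold lam; field; lra). lra. Qed.

Theorem theorem3p5 :
  (forall eps : R, 0 < eps ->
    exists K : nat, forall k : nat, (K <= k)%nat ->
    exists N : nat, forall n : nat, (N <= n)%nat ->
    forall (Omega : Type) (ps : prob_space Omega) (X : nat -> Omega -> nat),
      hyps ps n X ->
      Pr ps (bigEvent n X k eps) = 0 \/
      / INR n * ln (Pr ps (bigEvent n X k eps)) <= - (eps / 8) * ln (INR k) + 4)
  /\
  (forall eps : R, 0 < eps ->
    forall M : R,
    exists K : nat, forall k : nat, (K <= k)%nat ->
    exists N : nat, forall n : nat, (N <= n)%nat ->
    forall (Omega : Type) (ps : prob_space Omega) (X : nat -> Omega -> nat),
      hyps ps n X ->
      Pr ps (bigEvent n X k eps) = 0 \/
      / INR n * ln (Pr ps (bigEvent n X k eps)) <= M).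
Proof. split. exact part1.
intros eps he M. destruct (part1 eps he) as [K1 HK1].
destruct (INR_unbounded (exp (8 * (4 - M) / eps))) as [K2 HK2].
exists (Nat.max K1 K2). intros k hk.
destruct (HK1 k ltac:(lia)) as [N HN]. exists N. intros n hn Omega ps X Hh.
destruct (HN n hn Omega ps X Hh) as [h|h]; [left; auto|right].
assert (INR K2 <= INR k) by (apply le_INR; lia).
pose proof (exp_pos (8 * (4 - M) / eps)).
assert (Hl : 8 * (4 - M) / eps < ln (INR k)).
{ rewrite <- (ln_exp (8 * (4 - M) / eps)). apply ln_increasing; auto. lra. }
assert (- (eps / 8) * ln (INR k) + 4 < M).
{ assert (eps / 8 * (8 * (4 - M) / eps) = 4 - M) by (field; lra).
  assert (0 < eps / 8) by lra. nra. }
lra. Qed.
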